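(* Let $W,V$ be subspaces of $\mathbb{C}^n$ with $\mathbb{C}^n=W\oplus V^\perp$, let $\{\mathbf{w}_i\}_{i=1}^N$ be a frame for $W$ with frame operator $\mathbf{S}=\sum_{i=1}^N\mathbf{w}_i\mathbf{w}_i^*$, and let $\{\mathbf{v}_i\}_{i=1}^N$ be an oblique dual frame of $\{\mathbf{w}_i\}_{i=1}^N$ on $V$ such that $\langle\mathbf{w}_i,\mathbf{v}_i\rangle=\langle\mathbf{w}_j,\mathbf{v}_j\rangle$ for all $i,j$. Let $d_W=\dim W$. Then $$\max_{i\ne j}|\langle\mathbf{w}_i,\mathbf{v}_j\rangle|^2\ge\frac{d_W(N-d_W)}{N^2(N-1)}.$$ Furthermore, equality holds if and only if any of the following equivalent conditions holds: (1) $|\langle\mathbf{w}_i,\mathbf{v}_j\rangle|$ is constant over all $i\ne j$, and $\mathbf{v}_j=\boldsymbol{\pi}_{VW^\perp}\mathbf{S}^\dagger\mathbf{w}_j$ for each $j$; (2) the mixed Gram matrix $\mathbf{G}=(\langle\mathbf{w}_i,\mathbf{v}_j\rangle)_{ij}$ equals $\frac{d_W}{N}\left(\mathbf{Id}_{N\times N}+\sqrt{\frac{N-d_W}{d_W(N-1)}}\,\mathbf{Q}\right)$ for some generalized signature matrix $\mathbf{Q}$; (3) the vectors $\boldsymbol{\psi}_i:=\sqrt{N/d_W}\,(\mathbf{S}^\dagger)^{1/2}\mathbf{w}_i$, $i=1,\dots,N$, form an $(N,d_W)$-equiangular tight frame for $W$, and $\mathbf{v}_j=\boldsymbol{\pi}_{VW^\perp}\mathbf{S}^\dagger\mathbf{w}_j$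 for each $j$.
   Context: The inner product on $\mathbb{C}^n$ is $\langle\mathbf{x},\mathbf{y}\rangle=\mathbf{y}^*\mathbf{x}$. $\mathbf{S}^\dagger$ is the Moore–Penrose inverse and $(\mathbf{S}^\dagger)^{1/2}$ its positive semidefinite square root. When $\mathbb{C}^n=W\oplus V^\perp$ (equivalently $\mathbb{C}^n=V\oplus W^\perp$), $\boldsymbol{\pi}_{WV^\perp}$ is the oblique projection onto $W$ along $V^\perp$ and $\boldsymbol{\pi}_{VW^\perp}$ the oblique projection onto $V$ along $W^\perp$. A finite family in $W$ is a frame for $W$ if it spans $W$. A frame $\{\mathbf{v}_i\}_{i=1}^N\subset V$ for $V$ is an oblique dual frame of $\{\mathbf{w}_i\}$ on $V$ if $\boldsymbol{\pi}_{WV^\perp}\mathbf{f}=\sum_{i=1}^N\langle\mathbf{f},\mathbf{v}_i\rangle\mathbf{w}_i$ for all $\mathbf{f}\in\mathbb{C}^n$. A generalized signature matrix is a self-adjoint $N\times N$ matrix with zero diagonal and unimodular off-diagonal entries. A family of unit-norm vectors $\{\mathbf{f}_i\}_{i=1}^N$ in a $d$-dimensional space is an $(N,d)$-equiangular tight frame if it is a tight frame for that space and $|\langle\mathbf{f}_i,\mathbf{f}_j\rangle|^2$ is the same constant for all $i\ne j$. *)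

(* Defs.v *)
(* C^n is modelled by column vectors 'cV[C]_n; definitions are
   generic over a numClosedFieldType C, the theorem instantiates C := R[i]
   (the complex numbers over a realType R, i.e. over the reals). *)
From HB Require Import structures.
From mathcomp Require Import all_boot all_order all_algebra.
From mathcomp Require Import reals complex.
Set Implicit Arguments.
Unset Strict Implicit.
Unset Printing Implicit Defensive.
Import Order.TTheory GRing.Theory Num.Theory.
Local Open Scope ring_scope.

Section FrameDefs.
Variable C : numClosedFieldType.

Definition adjmx (m p : nat) (A : 'M[C]_(m, p)) : 'M[C]_(p, m) :=
  (map_mx Num.conj A)^T.

Definition dotv (n : nat) (x y : 'cV[C]_n) : C := (adjmx y *m x) 0 0.

(* A subspace U of C^n is represented by a square matrix whose row space is
   U^T; a column vector x belongs to U iff x^T lies in the row space. *)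
Definition inU (n : nat) (U : 'M[C]_n) (x : 'cV[C]_n) : Prop := (x^T <= U)%MS.

Definition inPerp (n : nat) (U : 'M[C]_n) (x : 'cV[C]_n) : Prop :=
  forall u, inU U u -> dotv x u = 0.

Definition direct_sum_perp (n : nat) (W V : 'M[C]_n) : Prop :=
  (forall x : 'cV[C]_n, exists w u, [/\ inU W w, inPerp V u & x = w + u]) /\
  (forall x : 'cV[C]_n, inU W x -> inPerp V x -> x = 0).

Definition oblique_proj (n : nat) (W V : 'M[C]_n) (P : 'M[C]_n) : Prop :=
  forall x : 'cV[C]_n, inU W (P *m x) /\ inPerp V (x - P *m x).

Definition is_frame (n N : nat) (U : 'M[C]_n) (f : 'I_N -> 'cV[C]_n) : Prop :=
  (\matrix_(i < N) (f i)^T == U)%MS.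

Definition frame_op (n N : nat) (f : 'I_N -> 'cV[C]_n) : 'M[C]_n :=
  \sum_(i < N) (f i *m adjmx (f i)).

Definition oblique_dual (n N : nat) (V P : 'M[C]_n) (w v : 'I_N -> 'cV[C]_n) : Prop :=
  is_frame V v /\
  forall f : 'cV[C]_n, P *m f = \sum_(i < N) dotv f (v i) *: w i.

Definition is_MP_inverse (n : nat) (A X : 'M[C]_n) : Prop :=
  [/\ A *m X *m A = A, X *m A *m X = X,
      adjmx (A *m X) = A *m X & adjmx (X *m A) = X *m A].

Definition is_psd (n : nat) (A : 'M[C]_n) : Prop :=
  adjmx A = A /\ forall x : 'cV[C]_n, 0 <= dotv (A *m x) x.

Definition gen_signature (N : nat) (Q : 'M[C]_N) : Prop :=
  [/\ adjmx Q = Q, forall i, Q i i = 0 & forall i j, i != j -> `|Q i j| = 1].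

Definition is_tight_frame (n N : nat) (U : 'M[C]_n) (f : 'I_N -> 'cV[C]_n) : Prop :=
  is_frame U f /\
  exists A : C, 0 < A /\
    forall x : 'cV[C]_n, inU U x ->
      \sum_(i < N) `|dotv x (f i)| ^+ 2 = A * dotv x x.

Definition is_ETF (n N d : nat) (U : 'M[C]_n) (f : 'I_N -> 'cV[C]_n) : Prop :=
  [/\ \rank U = d,
      (forall i, dotv (f i) (f i) = 1),
      is_tight_frame U f &
      exists c : C, forall i j, i != j -> `|dotv (f i) (f j)| ^+ 2 = c].

Definition mixed_gram (n N : nat) (w v : 'I_N -> 'cV[C]_n) : 'M[C]_N :=
  \matrix_(i < N, j < N) dotv (w i) (v j).

(* max_{i <> j} |G_ij|^2  (all terms are >= 0, so the seed 0 is harmless) *)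
Definition max_offdiag_sq (N : nat) (G : 'M[C]_N) : C :=
  \big[Num.max/0]_(p : 'I_N * 'I_N | p.1 != p.2) (`|G p.1 p.2| ^+ 2).

End FrameDefs.

(* Main.v *)
Require Import Defs.
From HB Require Import structures.
From mathcomp Require Import all_boot all_order all_algebra.
From mathcomp Require Import reals complex ring.
Set Implicit Arguments.
Unset Strict Implicit.
Unset Printing Implicit Defensive.
Import Order.TTheory GRing.Theory Num.Theory.
Local Open Scope ring_scope.



Section Gen.
Variable C : numClosedFieldType.

Lemma adjmxE m p (A : 'M[C]_(m, p)) i j : adjmx A i j = (A j i)^*.
Proof. by rewrite /adjmx !mxE. Qed.

Lemma adjmxK m p (A : 'M[C]_(m, p)) : adjmx (adjmx A) = A.
Proof. by apply/matrixP => i j; rewrite !adjmxE conjCK. Qed.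

Lemma adjmxD m p (A B : 'M[C]_(m, p)) : adjmx (A + B) = adjmx A + adjmx B.
Proof. by apply/matrixP => i j; rewrite /adjmx !mxE rmorphD. Qed.

Lemma adjmxN m p (A : 'M[C]_(m, p)) : adjmx (- A) = - adjmx A.
Proof. by apply/matrixP => i j; rewrite /adjmx !mxE rmorphN. Qed.

Lemma adjmxB m p (A B : 'M[C]_(m, p)) : adjmx (A - B) = adjmx A - adjmx B.
Proof. by rewrite adjmxD adjmxN. Qed.

Lemma adjmxZ m p a (A : 'M[C]_(m, p)) : adjmx (a *: A) = a^* *: adjmx A.
Proof. by apply/matrixP => i j; rewrite /adjmx !mxE rmorphM. Qed.

Lemma adjmxM m p q (A : 'M[C]_(m, p)) (B : 'M[C]_(p, q)) :
  adjmx (A *m B) = adjmx B *m adjmx A.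
Proof.
apply/matrixP => i j; rewrite adjmxE !mxE rmorph_sum; apply: eq_bigr => k _.
by rewrite !adjmxE rmorphM mulrC.
Qed.

Lemma adjmx1 m : adjmx (1%:M : 'M[C]_m) = 1%:M.
Proof. by apply/matrixP => i j; rewrite adjmxE !mxE eq_sym rmorph_nat. Qed.

Lemma adjmx0 m p : adjmx (0 : 'M[C]_(m, p)) = 0.
Proof. by apply/matrixP => i j; rewrite adjmxE !mxE rmorph0. Qed.

Lemma adjmx_tr m p (A : 'M[C]_(m, p)) : adjmx A^T = (adjmx A)^T.
Proof. by apply/matrixP => i j; rewrite /adjmx !mxE. Qed.

Lemma mxtrace_adj m (A : 'M[C]_m) : \tr (adjmx A) = (\tr A)^*.
Proof. by rewrite /mxtrace rmorph_sum; apply: eq_bigr => i _; rewrite adjmxE. Qed.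

Lemma fro_sum m p (X : 'M[C]_(m, p)) :
  \tr (adjmx X *m X) = \sum_i \sum_j `|X j i| ^+ 2.
Proof.
rewrite /mxtrace; apply: eq_bigr => i _; rewrite mxE; apply: eq_bigr => j _.
by rewrite adjmxE normCKC.
Qed.

Lemma fro_ge0 m p (X : 'M[C]_(m, p)) : 0 <= \tr (adjmx X *m X).
Proof. by rewrite fro_sum; apply: sumr_ge0 => i _; apply: sumr_ge0 => j _; apply: exprn_ge0. Qed.

Lemma fro_eq0 m p (X : 'M[C]_(m, p)) : \tr (adjmx X *m X) = 0 -> X = 0.
Proof.
rewrite fro_sum => H; apply/matrixP => j i; rewrite mxE.
have H1 : forall i0, \sum_j `|X j i0| ^+ 2 = 0.
  move=> i0; apply: (psumr_eq0P _ H) => // k _.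
  by apply: sumr_ge0 => l _; apply: exprn_ge0.
have H2 : `|X j i| ^+ 2 = 0.
  by apply: (psumr_eq0P _ (H1 i)) => // k _; apply: exprn_ge0.
by move: H2; move/eqP; rewrite expf_eq0 /= normr_eq0 => /eqP.
Qed.

Lemma adjmul_eq0 m p (X : 'M[C]_(m, p)) : adjmx X *m X = 0 -> X = 0.
Proof. by move=> H; apply: fro_eq0; rewrite H mxtrace0. Qed.

Lemma muladj_eq0 m p (X : 'M[C]_(m, p)) : X *m adjmx X = 0 -> X = 0.
Proof.
move=> H; suff: adjmx X = 0 by move=> H2; rewrite -[X]adjmxK H2 adjmx0.
by apply: adjmul_eq0; rewrite adjmxK.
Qed.

Lemma dotv_eq0 m (x : 'cV[C]_m) : dotv x x = 0 -> x = 0.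
Proof.
move=> H; apply: adjmul_eq0; apply/matrixP => i j.
by rewrite !ord1 [RHS]mxE; exact: H.
Qed.

Lemma mxtrace_idem m (E : 'M[C]_m) : E *m E = E -> \tr E = (\rank E)%:R.
Proof.
move=> HE.
have := mulmx_base E; have := row_base_free E; have := col_base_full E.
move: (col_base E) (row_base E) => Cb Rb hC hR hE.
have h1 : Rb *m Cb = 1%:M.
  apply: (row_free_inj hR); rewrite mul1mx.
  apply: (row_full_inj hC).
  by rewrite !mulmxA hE -mulmxA hE HE.
by rewrite -{1}hE mxtrace_mulC h1 mxtrace1.
Qed.

End Gen.



Section Gen2.
Variable C : numClosedFieldType.

Lemma fro_idem m (E : 'M[C]_m) (t : C) : E *m E = E -> \tr E = t -> t \is Num.real ->
  2 * \tr (adjmx E *m E) = 2 * t + \tr (adjmx (E - adjmx E) *m (E - adjmx E)).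
Proof.
move=> HE Ht Hr.
have h1 : \tr (adjmx E *m adjmx E) = t by rewrite -adjmxM HE mxtrace_adj Ht conj_Creal.
have h2 : \tr (E *m adjmx E) = \tr (adjmx E *m E) by rewrite mxtrace_mulC.
rewrite adjmxB adjmxK mulmxBl !mulmxBr !raddfB /= h1 h2 HE Ht.
ring.
Qed.

Lemma max_nn (x y : C) : 0 <= x -> 0 <= y ->
  [/\ x <= Num.max x y, y <= Num.max x y & 0 <= Num.max x y].
Proof.
move=> hx hy; rewrite /Num.max /Order.max.
case: ifP => hxy.
  by split => //; apply: ltW.
have hyx : y <= x.
  by move: hxy; rewrite real_ltNge ?ger0_real // => /negbFE.
by split.
Qed.

Lemma bigmax_ub (I : eqType) (r : seq I) (P : pred I) (F : I -> C) :
  (forall i, P i -> 0 <= F i) ->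
  0 <= \big[Num.max/0]_(i <- r | P i) F i /\
  forall i, i \in r -> P i -> F i <= \big[Num.max/0]_(i <- r | P i) F i.
Proof.
move=> hF; elim: r => [|a r [IH1 IH2]].
  by rewrite big_nil; split => // i.
rewrite big_cons; case: ifP => Pa.
  have [h1 h2 h3] := max_nn (hF a Pa) IH1.
  split => // i; rewrite in_cons => /orP [/eqP -> _ //|ir Pi].
  exact: le_trans (IH2 i ir Pi) h2.
split => // i; rewrite in_cons => /orP [/eqP -> |ir Pi]; first by rewrite Pa.
exact: IH2.
Qed.

Lemma bigmax_const (I : eqType) (r : seq I) (P : pred I) (F : I -> C) (b : C) :
  0 <= b -> (forall i, i \in r -> P i -> F i = b) -> has P r ->
  \big[Num.max/0]_(i <- r | P i) F i = b.
Proof.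
move=> hb; elim: r => [|a r IH] //= hF.
rewrite big_cons; case: ifP => Pa /=.
  rewrite hF ?mem_head //.
  case hr: (has P r).
    rewrite IH // ?maxxx // => i ir Pi; apply: hF => //; by rewrite in_cons ir orbT.
  rewrite big_hasC ?hr //.
  rewrite /Num.max /Order.max; case: ifP => // h.
  by move: (lt_le_asym b 0); rewrite h hb.
move=> hr; apply: IH => // i ir Pi; apply: hF => //; by rewrite in_cons ir orbT.
Qed.

End Gen2.



Lemma mx_eq_mul (C : pzRingType) m p (X Z : 'M[C]_(m, p)) :
  (forall f : 'cV[C]_p, X *m f = Z *m f) -> X = Z.
Proof.
move=> H; apply/matrixP => i j.
move: (congr1 (fun M : 'cV[C]_m => M i 0) (H (delta_mx j 0))); rewrite -!colE !mxE //.
Qed.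

Lemma mx_eq_col (C : Type) m p (X Z : 'M[C]_(m, p)) :
  (forall j, col j X = col j Z) -> X = Z.
Proof.
move=> H; apply/matrixP => i j.
by move: (congr1 (fun M : 'cV[C]_m => M i 0) (H j)); rewrite !mxE.
Qed.

Lemma subB_sub (F : fieldType) m1 m2 k (A B : 'M[F]_(m1, k)) (D : 'M[F]_(m2, k)) :
  (A <= D)%MS -> (B <= D)%MS -> (A - B <= D)%MS.
Proof.
move=> hA hB; apply: addmx_sub => //; rewrite -scaleN1r; exact: scalemx_sub.
Qed.

Lemma inU_frame (C : numClosedFieldType) n N (U : 'M[C]_n) (f : 'I_N -> 'cV[C]_n) i :
  is_frame U f -> inU U (f i).
Proof.
move=> /andP [h _]; rewrite /inU; apply: submx_trans h.
by rewrite -(rowK (fun i => (f i)^T) i) row_sub.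
Qed.

Lemma dotv_conj (C : numClosedFieldType) n (x y : 'cV[C]_n) : dotv x y = (dotv y x)^*.
Proof. by rewrite /dotv -adjmxE adjmxM adjmxK. Qed.

Lemma dotvDr (C : numClosedFieldType) n (x y z : 'cV[C]_n) : dotv x (y + z) = dotv x y + dotv x z.
Proof. by rewrite /dotv adjmxD mulmxDl mxE. Qed.

Lemma colMl (C : pzRingType) m p q (X : 'M[C]_(m, p)) (Z : 'M[C]_(p, q)) j :
  col j (X *m Z) = X *m col j Z.
Proof. by rewrite !colE mulmxA. Qed.

Lemma sig_exists (C : numClosedFieldType) N (G0 : 'M[C]_N) (dd a : C) :
  (forall i j, G0 j i = (G0 i j)^*) -> (forall i, G0 i i = dd) ->
  (forall i j, i != j -> `|G0 i j| = dd * a) ->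
  exists Q : 'M[C]_N, gen_signature Q /\ G0 = dd *: (1%:M + a *: Q).
Proof.
move=> hA hd hn.
pose Q := \matrix_(i < N, j < N)
  (if i == j then 0 else if G0 i j == 0 then 1 else G0 i j / `|G0 i j|).
exists Q; split; first split.
- apply/matrixP => i j; rewrite adjmxE !mxE eq_sym.
  case: eqP => _; first by rewrite conjC0.
  rewrite hA conjC_eq0.
  case: eqP => hz; first by rewrite conjC1.
  by rewrite rmorphM /= fmorphV /= norm_conjC conjCK (conj_Creal (normr_real _)).
- by move=> i; rewrite mxE eqxx.
- move=> i j hij; rewrite mxE (negbTE hij).
  case: eqP => hz; first by rewrite normr1.
  by rewrite normf_div normr_id divff // normr_eq0; apply/eqP.
apply/matrixP => i j; rewrite !mxE.
case: (eqVneq i j) => [<-|hij].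
  by rewrite hd mulr0 addr0 mulr1.
rewrite add0r.
have hn' := hn i j hij.
case: eqP => hz.
  by rewrite hz mulr1 -hn' hz normr0.
rewrite mulrA -hn' mulrC divfK //; by rewrite normr_eq0; apply/eqP.
Qed.

Lemma colrow00 (C : Type) m p (X : 'M[C]_(m, p)) i j : (col i (row j X)) 0 0 = X j i.
Proof. by rewrite !mxE. Qed.

Lemma adj_col (C : numClosedFieldType) m p (X : 'M[C]_(m, p)) j : adjmx (col j X) = row j (adjmx X).
Proof. by apply/matrixP => a b; rewrite !adjmxE !mxE. Qed.

Lemma scale_entry (C : pzRingType) m p (c : C) (X : 'M[C]_(m, p)) i j : (c *: X) i j = c * X i j.
Proof. by rewrite mxE. Qed.

Lemma dotv_col (C : numClosedFieldType) m p (Z : 'M[C]_(m, p)) (x : 'cV[C]_m) i :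
  dotv x (col i Z) = (adjmx Z *m x) i 0.
Proof. by rewrite /dotv !mxE; apply: eq_bigr => r _; rewrite !adjmxE !mxE. Qed.

Lemma mat_colT (C : Type) m p (Z : 'M[C]_(m, p)) : \matrix_(k < p) (col k Z)^T = Z^T.
Proof. by apply/matrixP => k r; rewrite !mxE. Qed.

Lemma tr11 (C : pzRingType) (X : 'M[C]_1) : \tr X = X 0 0.
Proof. by rewrite /mxtrace big_ord1. Qed.

Section Main.
Variable C : numClosedFieldType.
Variables (n N : nat) (W V : 'M[C]_n) (w v : 'I_N -> 'cV[C]_n) (Pw Pv Sd Sh : 'M[C]_n).
Hypothesis hN : (2 <= N)%N.
Hypothesis hd : (0 < \rank W)%N.
Hypothesis hds : direct_sum_perp W V.
Hypothesis hPw : oblique_proj W V Pw.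
Hypothesis hPv : oblique_proj V W Pv.
Hypothesis hfr : is_frame W w.
Hypothesis hMP : is_MP_inverse (frame_op w) Sd.
Hypothesis hpsd : is_psd Sh.
Hypothesis hSh : Sh *m Sh = Sd.
Hypothesis hdual : oblique_dual V Pw w v.
Hypothesis hdiag : forall i j, dotv (w i) (v i) = dotv (w j) (v j).

Definition M := \matrix_(r < n, i < N) w i r 0.
Definition Y := \matrix_(r < n, i < N) v i r 0.
Definition S := frame_op w.
Definition A := adjmx Y *m M.
Definition B := adjmx M *m Sd *m M.
Definition G := mixed_gram w v.
Definition d := \rank W.

Lemma colM j : col j M = w j.
Proof. by apply/matrixP => r k; rewrite !mxE ord1. Qed.

Lemma colY j : col j Y = v j.
Proof. by apply/matrixP => r k; rewrite !mxE ord1. Qed.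

Lemma GE : G = A^T.
Proof.
apply/matrixP => i j; rewrite /G /A /mixed_gram /dotv !mxE.
by apply: eq_bigr => r _; rewrite !adjmxE !mxE.
Qed.

Lemma SE : S = M *m adjmx M.
Proof.
apply/matrixP => r s; rewrite /S /frame_op summxE !mxE.
apply: eq_bigr => i _; by rewrite !mxE big_ord1 !adjmxE.
Qed.

Lemma hW : (\matrix_(i < N) (w i)^T == W)%MS.
Proof. exact: hfr. Qed.

Lemma MtE : \matrix_(i < N) (w i)^T = M^T.
Proof. by apply/matrixP => i r; rewrite !mxE. Qed.

Lemma inU_M (c : 'cV[C]_N) : inU W (M *m c).
Proof.
rewrite /inU trmx_mul; apply: submx_trans (submxMl _ _) _.
by rewrite -MtE; case/andP: hW.
Qed.

Lemma inU_w i : inU W (w i).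
Proof. by rewrite -colM colE; apply: inU_M. Qed.

Lemma inU_span x : inU W x -> exists c : 'cV[C]_N, x = M *m c.
Proof.
move=> hx.
have : (x^T <= M^T)%MS by rewrite -MtE; apply: submx_trans hx _; case/andP: hW.
case/submxP => D hD; exists D^T.
by rewrite -[x]trmxK hD trmx_mul trmxK.
Qed.

Lemma inU_sub (U : 'M[C]_n) x y : inU U x -> inU U y -> inU U (x - y).
Proof. by rewrite /inU linearB /=; apply: subB_sub. Qed.

Lemma fixW x : inU W x -> Pw *m x = x.
Proof.
move=> hx; have [h1 h2] := hPw x.
have h3 : inU W (x - Pw *m x) by apply: inU_sub.
have := hds.2 _ h3 h2; move/eqP; rewrite subr_eq0 => /eqP; done.
Qed.

Lemma PwM : Pw *m M = M.
Proof. apply: mx_eq_mul => f; rewrite -mulmxA fixW //; exact: inU_M. Qed.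

Lemma PwE : Pw = M *m adjmx Y.
Proof.
apply: mx_eq_mul => f; rewrite hdual.2.
apply/matrixP => r k; rewrite ord1 -mulmxA !mxE summxE.
apply: eq_bigr => i _; rewrite !mxE mulrC /dotv; congr (_ * _).
rewrite !mxE; apply: eq_bigr => s _; rewrite !adjmxE !mxE //.
Qed.

Lemma A_idem : A *m A = A.
Proof. by rewrite /A mulmxA -[adjmx Y *m M *m adjmx Y]mulmxA -PwE -mulmxA PwM. Qed.

Lemma Pw_idem : Pw *m Pw = Pw.
Proof. by rewrite {2}PwE mulmxA PwM -PwE. Qed.

Lemma rank_Pw : \rank Pw = d.
Proof.
rewrite -mxrank_tr /d.
have e1 : (Pw^T == M^T)%MS.
  apply/andP; split; first by rewrite PwE trmx_mul submxMl.
  by rewrite -{1}PwM trmx_mul submxMl.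
by rewrite (eqmx_rank e1) -MtE (eqmx_rank hW).
Qed.

Lemma trA : \tr A = d%:R.
Proof. by rewrite /A mxtrace_mulC -PwE mxtrace_idem ?Pw_idem // rank_Pw. Qed.

Lemma hNpos : (0 < N)%N.
Proof. by apply: leq_trans hN. Qed.

Lemma diagA i : A i i = d%:R / N%:R.
Proof.
have e : forall j, A j j = A i i.
  move=> j; move: (hdiag j i); rewrite /A /dotv !mxE.
  have ee : forall k, \sum_j0 adjmx Y k j0 * M j0 k = \sum_j0 adjmx (v k) 0 j0 * w k j0 0.
    by move=> k; apply: eq_bigr => r _; rewrite !adjmxE !mxE.
  by rewrite !ee.
have : \tr A = A i i *+ N.
  have e2 : \sum_j A j j = \sum_(j < N) A i i by apply: eq_bigr => j _; exact: e.
  by rewrite /mxtrace e2 sumr_const card_ord.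
rewrite trA => ->; rewrite -mulr_natr mulfK // pnatr_eq0 -lt0n; exact: hNpos.
Qed.


Lemma Sd_herm : adjmx Sd = Sd.
Proof. by rewrite -hSh adjmxM hpsd.1. Qed.

Lemma S_herm : adjmx S = S.
Proof. by rewrite SE adjmxM adjmxK. Qed.

Lemma MP1 : S *m Sd *m S = S.
Proof. by case: hMP. Qed.
Lemma MP2 : Sd *m S *m Sd = Sd.
Proof. by case: hMP. Qed.
Lemma SSd_comm : S *m Sd = Sd *m S.
Proof. by case: hMP => _ _ h _; rewrite -h adjmxM Sd_herm S_herm. Qed.

Lemma hMM k (X : 'M[C]_(k, n)) : X *m M *m adjmx M = X *m S.
Proof. by rewrite -mulmxA -SE. Qed.

Lemma hMP1 k (X : 'M[C]_(k, n)) : X *m S *m Sd *m S = X *m S.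
Proof. by rewrite -!mulmxA [S *m (Sd *m S)]mulmxA MP1. Qed.

Lemma SSdM : S *m Sd *m M = M.
Proof.
apply/eqP; rewrite -subr_eq0; apply/eqP; apply: muladj_eq0.
rewrite adjmxB !adjmxM Sd_herm S_herm mulmxBl !mulmxBr !mulmxA !hMM !hMP1 MP1.
by rewrite -SE MP1 !subrr.
Qed.

Lemma hSSdM k (X : 'M[C]_(k, n)) : X *m S *m Sd *m M = X *m M.
Proof. by rewrite -!mulmxA [S *m (Sd *m M)]mulmxA SSdM. Qed.

Lemma hMY k (X : 'M[C]_(k, n)) : X *m M *m adjmx Y = X *m Pw.
Proof. by rewrite -mulmxA -PwE. Qed.

Lemma hPwM k (X : 'M[C]_(k, n)) : X *m Pw *m M = X *m M.
Proof. by rewrite -mulmxA PwM. Qed.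

Lemma B_herm : adjmx B = B.
Proof. by rewrite /B !adjmxM adjmxK Sd_herm mulmxA. Qed.

Lemma AB : A *m B = A.
Proof. by rewrite /A /B !mulmxA hMM hSSdM. Qed.

Lemma BA : B *m A = B.
Proof. by rewrite /A /B !mulmxA hMY hPwM. Qed.

Lemma herm_iff : adjmx A = A <-> A = B.
Proof.
split => [h|->]; last exact: B_herm.
by rewrite -h -{1}AB adjmxM h B_herm BA.
Qed.

Lemma MPv : adjmx M *m Pv = adjmx M.
Proof.
apply: mx_eq_mul => f; apply/eqP; rewrite -subr_eq0 -mulmxA -mulmxBr -opprB mulmxN oppr_eq0.
apply/eqP/matrixP => i k; rewrite ord1 [RHS]mxE.
transitivity (dotv (f - Pv *m f) (w i)); last exact: (hPv f).2 _ (inU_w i).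
rewrite /dotv !mxE; apply: eq_bigr => r _; by rewrite !adjmxE !mxE.
Qed.

Lemma canon_AB : (forall j, v j = Pv *m Sd *m w j) -> A = B.
Proof.
move=> hc.
have hY : Y = Pv *m Sd *m M by apply: mx_eq_col => j; rewrite colY colMl colM hc.
have hPvM : adjmx Pv *m M = M by rewrite -{2}[M]adjmxK -MPv adjmxM adjmxK.
by rewrite /A /B hY !adjmxM Sd_herm -!mulmxA hPvM.
Qed.

Lemma VWperp u : inU V u -> (forall x, inU W x -> dotv u x = 0) -> u = 0.
Proof.
move=> hV hW0; apply: dotv_eq0.
have [w0 [p [h1 h2 h3]]] := hds.1 u.
rewrite {2}h3. rewrite dotvDr. rewrite (hW0 _ h1) add0r. rewrite dotv_conj. rewrite (h2 u hV) conjC0 //.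
Qed.

Lemma AB_canon : A = B -> forall j, v j = Pv *m Sd *m w j.
Proof.
move=> hAB j; apply/eqP; rewrite -subr_eq0; apply/eqP.
apply: VWperp.
  apply: inU_sub; first exact: inU_frame hdual.1.
  by rewrite -mulmxA; exact: (hPv _).1.
have hz : adjmx M *m (v j - Pv *m Sd *m w j) = 0.
  have e1 : adjmx M *m v j = col j B.
    have eA : adjmx A = adjmx M *m Y by rewrite /A adjmxM adjmxK.
    by rewrite -colY -colMl -eA hAB B_herm.
  have e2 : adjmx M *m (Pv *m Sd *m w j) = col j B.
    by rewrite /B colMl colM !mulmxA MPv.
  by rewrite mulmxBr e1 e2 subrr.
move=> x /inU_span [c ->]; rewrite /dotv adjmxM -mulmxA hz mulmx0 mxE //.
Qed.

Lemma canon_iff : (forall j, v j = Pv *m Sd *m w j) <-> A = B.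
Proof. split; [exact: canon_AB | exact: AB_canon]. Qed.


Definition m0 := max_offdiag_sq G.
Definition bb : C := d%:R * (N%:R - d%:R) / (N%:R ^+ 2 * (N%:R - 1)).
Definition Tsum := \sum_i \sum_(j | j != i) `|G i j| ^+ 2.
Definition Fsum := \sum_i \sum_j `|G i j| ^+ 2.
Definition K : C := N%:R * (N%:R - 1).

Lemma GA i j : G i j = A j i.
Proof. by rewrite GE mxE. Qed.

Lemma dleN : (d <= N)%N.
Proof. by rewrite /d -(eqmx_rank hW) rank_leq_row. Qed.

Lemma N1_gt0 : 0 < (N%:R : C) - 1.
Proof. by rewrite subr_gt0 ltr1n. Qed.

Lemma N_gt0 : 0 < (N%:R : C).
Proof. by rewrite ltr0n hNpos. Qed.

Lemma K_gt0 : 0 < K.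
Proof. by rewrite /K mulr_gt0 ?N_gt0 ?N1_gt0. Qed.

Lemma bb_ge0 : 0 <= bb.
Proof.
apply: divr_ge0.
  by apply: mulr_ge0; rewrite ?ler0n // subr_ge0 ler_nat dleN.
by apply: mulr_ge0; [apply: exprn_ge0; rewrite ler0n | apply: ltW; exact: N1_gt0].
Qed.

Lemma Kbb : K * bb = d%:R - d%:R ^+ 2 / N%:R.
Proof.
have h1 := lt0r_neq0 N_gt0; have h2 := lt0r_neq0 N1_gt0.
rewrite /K /bb; field; rewrite h1 h2 //.
Qed.

Lemma F_fro : \tr (adjmx A *m A) = Fsum.
Proof. by rewrite fro_sum; apply: eq_bigr => i _; apply: eq_bigr => j _; rewrite GA. Qed.

Lemma F_id : 2 * Fsum = 2 * d%:R + \tr (adjmx (A - adjmx A) *m (A - adjmx A)).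
Proof. by rewrite -F_fro; apply: fro_idem; [exact: A_idem | exact: trA | exact: realn]. Qed.

Lemma F_ge : d%:R <= Fsum.
Proof.
have := F_id; have := fro_ge0 (A - adjmx A).
move: (\tr _) => t ht e.
have : 2 * d%:R <= 2 * Fsum :> C by rewrite e lerDl.
by rewrite ler_pM2l.
Qed.

Lemma F_eq : Fsum = d%:R <-> adjmx A = A.
Proof.
split => [h|h].
  have := F_id; rewrite h -{1}[2 * d%:R]addr0 => /addrI /esym /fro_eq0.
  by move/eqP; rewrite subr_eq0 => /eqP.
by have := F_id; rewrite h subrr adjmx0 mul0mx mxtrace0 addr0 => /mulfI; apply; rewrite pnatr_eq0.
Qed.

Lemma FT : Fsum = d%:R ^+ 2 / N%:R + Tsum.
Proof.
rewrite /Fsum /Tsum.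
have e : forall i, \sum_j `|G i j| ^+ 2 = (d%:R / N%:R) ^+ 2 + \sum_(j | j != i) `|G i j| ^+ 2.
  move=> i; rewrite (bigD1 i) //= GA diagA ger0_norm // divr_ge0 ?ler0n //.
rewrite (eq_bigr _ (fun i _ => e i)) big_split /= sumr_const card_ord.
congr (_ + _); rewrite -mulr_natr; have h1 := lt0r_neq0 N_gt0; field; by rewrite h1.
Qed.

Lemma sum_offc (c : C) : \sum_(i < N) \sum_(j < N | j != i) c = K * c.
Proof.
have e : forall i : 'I_N, \sum_(j < N | j != i) c = c *+ N - c.
  move=> i; have h : \sum_(j < N) c = c *+ N by rewrite sumr_const card_ord.
  by rewrite -h [in RHS](bigD1 i) //= [c + _]addrC addrK.
rewrite (eq_bigr _ (fun i _ => e i)) sumr_const card_ord /K.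
rewrite -[(c *+ N - c) *+ N]mulr_natr -[c *+ N]mulr_natr; ring.
Qed.

Lemma le_m0 i j : i != j -> `|G i j| ^+ 2 <= m0.
Proof.
move=> hij; have [_ h] := @bigmax_ub C _ (index_enum ('I_N * 'I_N)%type)
   (fun p : 'I_N * 'I_N => p.1 != p.2) (fun p : 'I_N * 'I_N => `|G p.1 p.2| ^+ 2)
   (fun p _ => exprn_ge0 2 (normr_ge0 _)).
exact: (h (i, j) (mem_index_enum _) hij).
Qed.

Lemma T_le : Tsum <= K * m0.
Proof.
rewrite -sum_offc; apply: ler_sum => i _; apply: ler_sum => j hj.
by apply: le_m0; rewrite eq_sym.
Qed.

Lemma bound : bb <= m0.
Proof.
rewrite -(ler_pM2l K_gt0) Kbb; apply: le_trans T_le.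
have -> : Tsum = Fsum - d%:R ^+ 2 / N%:R by rewrite FT [_ + Tsum]addrC addrK.
by apply: lerB => //; apply: F_ge.
Qed.


Lemma T_herm : adjmx A = A -> Tsum = K * bb.
Proof.
move/F_eq => h; rewrite Kbb; have e := FT; rewrite h in e.
by rewrite {1}e [_ + Tsum]addrC addrK.
Qed.

Lemma EQ0 : m0 = bb <-> (forall i j, i != j -> `|G i j| ^+ 2 = bb) /\ adjmx A = A.
Proof.
split.
  move=> hm.
  have hT : Tsum = K * bb.
    apply/le_anti/andP; split; first by rewrite -hm T_le.
    rewrite Kbb; have -> : Tsum = Fsum - d%:R ^+ 2 / N%:R by rewrite FT [_ + Tsum]addrC addrK.
    by apply: lerB => //; apply: F_ge.
  have hA : adjmx A = A.
    apply/F_eq; rewrite FT hT Kbb; by rewrite addrC subrK.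
  split => // i j hij.
  have hs : \sum_i \sum_(j | j != i) (bb - `|G i j| ^+ 2) = 0.
    have e : forall i : 'I_N, \sum_(j | j != i) (bb - `|G i j| ^+ 2) =
        \sum_(j < N | j != i) bb - \sum_(j | j != i) `|G i j| ^+ 2.
      by move=> k; rewrite sumrB.
    by rewrite (eq_bigr _ (fun i _ => e i)) sumrB sum_offc -/Tsum hT subrr.
  have hge : forall i0 j0, j0 != i0 -> 0 <= bb - `|G i0 j0| ^+ 2.
    by move=> i0 j0 h; rewrite subr_ge0 -hm le_m0 // eq_sym.
  have h1 : \sum_(j0 | j0 != i) (bb - `|G i j0| ^+ 2) = 0.
    by apply: (psumr_eq0P _ hs) => // k _; apply: sumr_ge0 => l hl; exact: hge.
  have h2 : bb - `|G i j| ^+ 2 = 0.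
    by apply: (psumr_eq0P _ h1); [exact: hge | rewrite eq_sym].
  by apply/eqP; rewrite eq_sym -subr_eq0 h2.
move=> [hc hA]; rewrite /m0 /max_offdiag_sq; apply: bigmax_const.
- exact: bb_ge0.
- by move=> p _ hp; apply: hc.
- apply/hasP; exists (Ordinal hNpos, Ordinal hN); first exact: mem_index_enum.
  by [].
Qed.

Lemma CST : adjmx A = A -> (exists c, forall i j, i != j -> `|G i j| = c) ->
  forall i j, i != j -> `|G i j| ^+ 2 = bb.
Proof.
move=> hA [c hc] i j hij; rewrite hc //.
have hT := T_herm hA.
have e : Tsum = K * c ^+ 2.
  rewrite /Tsum -sum_offc; apply: eq_bigr => k _; apply: eq_bigr => l hl.
  by rewrite hc // eq_sym.
apply: (mulfI (lt0r_neq0 K_gt0)); by rewrite -e -hT.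
Qed.


Definition xx : C := (N%:R - d%:R) / (d%:R * (N%:R - 1)).
Definition alpha : C := sqrtC xx.

Lemma d_gt0 : 0 < (d%:R : C).
Proof. by rewrite ltr0n. Qed.

Lemma xx_ge0 : 0 <= xx.
Proof.
apply: divr_ge0; first by rewrite subr_ge0 ler_nat dleN.
by apply: mulr_ge0; [rewrite ler0n | apply: ltW; exact: N1_gt0].
Qed.

Lemma alpha_ge0 : 0 <= alpha.
Proof. by rewrite sqrtC_ge0 xx_ge0. Qed.

Lemma dN_ge0 : 0 <= (d%:R / N%:R : C).
Proof. by rewrite divr_ge0 ?ler0n. Qed.

Lemma da_ge0 : 0 <= d%:R / N%:R * alpha.
Proof. by rewrite mulr_ge0 ?dN_ge0 ?alpha_ge0. Qed.

Lemma da_bb : (d%:R / N%:R * alpha) ^+ 2 = bb.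
Proof.
rewrite exprMn /alpha sqrtCK /xx /bb.
have h1 := lt0r_neq0 N_gt0; have h2 := lt0r_neq0 N1_gt0; have h3 := lt0r_neq0 d_gt0.
field; by rewrite h1 h2 h3.
Qed.

Lemma sqrt_bb : sqrtC bb = d%:R / N%:R * alpha.
Proof. by rewrite -da_bb sqrCK // da_ge0. Qed.

Lemma G_herm : adjmx A = A -> forall i j, G j i = (G i j)^*.
Proof. by move=> h i j; rewrite !GA -{1}h adjmxE. Qed.

Lemma A_herm_of_G : adjmx G = G -> adjmx A = A.
Proof.
move=> h; have eA : A = G^T by rewrite GE trmxK.
by rewrite eA adjmx_tr h.
Qed.

Lemma E2_to : (exists Q : 'M[C]_N, gen_signature Q /\
     G = (d%:R / N%:R) *: (1%:M + alpha *: Q)) ->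
  (forall i j, i != j -> `|G i j| ^+ 2 = bb) /\ adjmx A = A.
Proof.
move=> [Q [[hQ1 hQ2 hQ3] hG]]; split.
  move=> i j hij; rewrite hG !mxE (negbTE hij) add0r.
  rewrite normrM [`|alpha * _|]normrM hQ3 // mulr1 (ger0_norm dN_ge0) (ger0_norm alpha_ge0).
  by rewrite -da_bb.
apply: A_herm_of_G; rewrite {1}hG adjmxZ adjmxD adjmx1 adjmxZ hQ1.
rewrite (conj_Creal (ger0_real alpha_ge0)) (conj_Creal (ger0_real dN_ge0)).
by rewrite -hG.
Qed.

Lemma E2_from : (forall i j, i != j -> `|G i j| ^+ 2 = bb) -> adjmx A = A ->
  exists Q : 'M[C]_N, gen_signature Q /\
     G = (d%:R / N%:R) *: (1%:M + alpha *: Q).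
Proof.
move=> hc hA; apply: sig_exists.
- exact: G_herm.
- by move=> i; rewrite GA diagA.
- by move=> i j hij; rewrite -sqrt_bb -(hc i j hij) sqrCK.
Qed.


Definition s0 : C := sqrtC (N%:R / d%:R).
Definition Psi := s0 *: (Sh *m M).
Definition psi k := s0 *: (Sh *m w k).

Lemma s0_ge0 : 0 <= s0.
Proof. by rewrite sqrtC_ge0 divr_ge0 ?ler0n. Qed.

Lemma s0_conj : s0^* = s0.
Proof. exact: conj_Creal (ger0_real s0_ge0). Qed.

Lemma s0_sq : s0 * s0 = N%:R / d%:R.
Proof. by rewrite -expr2 sqrtCK. Qed.

Lemma s0_neq0 : s0 != 0.
Proof.
rewrite sqrtC_eq0 mulf_eq0 invr_eq0 !pnatr_eq0 negb_or -!lt0n hNpos.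
exact: hd.
Qed.

Lemma psi_col k : psi k = col k Psi.
Proof. by rewrite /psi /Psi -colM !colE !scalemxAl mulmxA. Qed.

Lemma Sh_herm : adjmx Sh = Sh.
Proof. exact: hpsd.1. Qed.

Lemma Bji i j : B j i = (adjmx (w j) *m Sd *m w i) 0 0.
Proof. by rewrite -!colM adj_col -row_mul -colMl -row_mul colrow00. Qed.

Lemma dot_psi i j : dotv (psi i) (psi j) = N%:R / d%:R * B j i.
Proof.
rewrite /dotv /psi adjmxZ -scalemxAl -scalemxAr scalerA scale_entry.
rewrite s0_conj s0_sq Bji adjmxM Sh_herm -!mulmxA [Sh *m (Sh *m _)]mulmxA hSh.
by rewrite !mulmxA.
Qed.

Lemma dot_psi_G i j : A = B -> dotv (psi i) (psi j) = N%:R / d%:R * G i j.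
Proof. by move=> h; rewrite dot_psi GA h. Qed.

Lemma hShP : Sh *m S *m Sd = Sh.
Proof.
apply/eqP; rewrite eq_sym -subr_eq0; apply/eqP.
have -> : Sh - Sh *m S *m Sd = Sh *m (1%:M - S *m Sd) by rewrite mulmxBr mulmx1 mulmxA.
apply: adjmul_eq0.
rewrite adjmxM Sh_herm -mulmxA [Sh *m (Sh *m _)]mulmxA hSh.
by rewrite mulmxBr mulmx1 mulmxA MP2 subrr mulmx0.
Qed.

Lemma hShQ : Sd *m S *m Sh = Sh.
Proof.
have := congr1 (@adjmx C n n) hShP.
by rewrite !adjmxM Sh_herm Sd_herm S_herm mulmxA.
Qed.

Definition Tp := Sh *m S *m Sh.

Lemma Tp_herm : adjmx Tp = Tp.
Proof. by rewrite /Tp !adjmxM Sh_herm S_herm mulmxA. Qed.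

Lemma Tp2 : Tp *m (Sd *m S) = Sd *m S.
Proof.
by rewrite /Tp -hSh !mulmxA -[Sh *m S *m Sh *m Sh]mulmxA hSh hShP hSh.
Qed.

Lemma Tp3 : Sd *m S *m Tp = Tp.
Proof. by rewrite /Tp !mulmxA hShQ. Qed.

Lemma TpE : Tp = Sd *m S.
Proof.
have := congr1 (@adjmx C n n) Tp2.
rewrite adjmxM Tp_herm !adjmxM Sd_herm S_herm SSd_comm => h.
by rewrite -{1}Tp3 h.
Qed.

Lemma TpM : Tp *m M = M.
Proof. by rewrite TpE -SSd_comm SSdM. Qed.

Lemma frame_psi : is_frame W psi.
Proof.
rewrite /is_frame.
have e1 : \matrix_(k < N) (psi k)^T = Psi^T.
  by apply/row_matrixP => k; rewrite rowK -tr_col -psi_col.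
rewrite e1 /Psi linearZ /=.
have e2 : Sh *m M = M *m (adjmx M *m Sd *m Sh *m M).
  by rewrite -{1}hShQ -SSd_comm SE !mulmxA.
have e3 : M = Sh *m M *m (adjmx M *m Sh *m M).
  by rewrite -{1}TpM /Tp SE !mulmxA.
have h1 : ((Sh *m M)^T :=: M^T)%MS.
  apply/eqmxP/andP; split.
    by rewrite e2 trmx_mul submxMl.
  by rewrite {1}e3 trmx_mul submxMl.
have h2 : (M^T :=: W)%MS by apply/eqmxP; rewrite -MtE; exact: hW.
apply/eqmxP; apply: eqmx_trans (eqmx_scale _ s0_neq0) _.
exact: eqmx_trans h1 h2.
Qed.

Lemma tight_psi x : inU W x ->
  \sum_(i < N) `|dotv x (psi i)| ^+ 2 = N%:R / d%:R * dotv x x.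
Proof.
move=> /inU_span [c hx].
have e : forall i, dotv x (psi i) = (adjmx Psi *m x) i 0 by move=> i; rewrite psi_col dotv_col.
rewrite (eq_bigr (fun i => `|(adjmx Psi *m x) i 0| ^+ 2)); last by move=> i _; rewrite e.
have := fro_sum (adjmx Psi *m x); rewrite big_ord1 => <-.
rewrite tr11 adjmxM adjmxK /Psi adjmxZ.
rewrite -!scalemxAr -!scalemxAl -!scalemxAr !scalerA scale_entry s0_conj s0_sq.
congr (_ * _); rewrite adjmxM Sh_herm.
have -> : adjmx x *m (Sh *m M) *m (adjmx M *m Sh *m x) = adjmx x *m Tp *m x.
  by rewrite /Tp SE !mulmxA.
by rewrite /dotv hx -mulmxA [Tp *m (M *m c)]mulmxA TpM.
Qed.


Lemma herm_canon : adjmx A = A -> forall j, v j = Pv *m Sd *m w j.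
Proof. by move/herm_iff; apply: AB_canon. Qed.

Lemma canon_herm : (forall j, v j = Pv *m Sd *m w j) -> adjmx A = A.
Proof. by move/canon_AB/herm_iff. Qed.

Lemma main_sec :
  let d := \rank W in
  let G := mixed_gram w v in
  let b := d%:R * (N%:R - d%:R) / (N%:R ^+ 2 * (N%:R - 1)) : C in
  b <= max_offdiag_sq G /\
  (max_offdiag_sq G = b <->
     (exists c : C, forall i j, i != j -> `|G i j| = c) /\
     (forall j, v j = Pv *m Sd *m w j)) /\
  (max_offdiag_sq G = b <->
     exists Q : 'M[C]_N, gen_signature Q /\
       G = (d%:R / N%:R) *: (1%:M + sqrtC ((N%:R - d%:R) / (d%:R * (N%:R - 1))) *: Q)) /\
  (max_offdiag_sq G = b <->
     is_ETF d W (fun k => sqrtC (N%:R / d%:R) *: (Sh *m w k)) /\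
     (forall j, v j = Pv *m Sd *m w j)).
Proof.
move=> d0 G0 b0.
have hm : max_offdiag_sq G0 = m0 by [].
have hb : b0 = bb by [].
have hG : G0 = G by [].
rewrite hm hb hG.
split; first exact: bound.
split.
  split.
    move/EQ0 => [hc hA]; split; last exact: herm_canon.
    exists (sqrtC bb) => i j hij; by rewrite -(hc i j hij) sqrCK.
  move=> [hex hcan]; have hA := canon_herm hcan.
  by apply/EQ0; split => //; apply: CST.
split.
  split.
    by move/EQ0 => [hc hA]; apply: E2_from.
  by move=> hQ; apply/EQ0; apply: E2_to.
split.
  move/EQ0 => [hc hA]; split; last exact: herm_canon.
  have hAB : A = B by apply/herm_iff.
  split => //.
  - move=> i; rewrite -/(psi i) dot_psi_G // GA diagA.
    have h1 := lt0r_neq0 N_gt0; have h3 := lt0r_neq0 d_gt0.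
    by rewrite mulrA divfK // divff.
  - split; first exact: frame_psi.
    exists (N%:R / d%:R); split; first by rewrite divr_gt0 ?N_gt0 ?d_gt0.
    exact: tight_psi.
  - exists ((N%:R / d%:R) ^+ 2 * bb) => i j hij.
    rewrite -/(psi i) -/(psi j) dot_psi_G // normrM exprMn hc // ger0_norm //.
    by rewrite divr_ge0 ?ler0n.
move=> [[_ _ _ [c hc]] hcan]; have hA := canon_herm hcan.
have hAB : A = B by apply/herm_iff.
apply/EQ0; split => //; apply: CST => //.
exists (d%:R / N%:R * sqrtC c) => i j hij.
have e : G i j = d%:R / N%:R * dotv (psi i) (psi j).
  have h1 := lt0r_neq0 N_gt0; have h3 := lt0r_neq0 d_gt0.
  have e1 : d%:R / N%:R * (N%:R / d%:R) = 1 :> C by field; rewrite h1 h3.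
  by rewrite dot_psi_G // mulrA e1 mul1r.
rewrite e normrM ger0_norm ?dN_ge0 //; congr (_ * _).
by rewrite -(hc i j hij) sqrCK.
Qed.

End Main.

Theorem theorem3p5 (R : realType) (n N : nat) (W V : 'M[R[i]]_n)
  (w v : 'I_N -> 'cV[R[i]]_n) (Pw Pv Sd Sh : 'M[R[i]]_n) :
  (2 <= N)%N ->
  (0 < \rank W)%N ->
  direct_sum_perp W V ->
  oblique_proj W V Pw ->
  oblique_proj V W Pv ->
  is_frame W w ->
  is_MP_inverse (frame_op w) Sd ->
  is_psd Sh -> Sh *m Sh = Sd ->
  oblique_dual V Pw w v ->
  (forall i j, dotv (w i) (v i) = dotv (w j) (v j)) ->
  let d := \rank W in
  let G := mixed_gram w v in
  let b := d%:R * (N%:R - d%:R) / (N%:R ^+ 2 * (N%:R - 1)) : R[i] in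
  b <= max_offdiag_sq G /\
  (max_offdiag_sq G = b <->
     (exists c : R[i], forall i j, i != j -> `|G i j| = c) /\
     (forall j, v j = Pv *m Sd *m w j)) /\
  (max_offdiag_sq G = b <->
     exists Q : 'M[R[i]]_N, gen_signature Q /\
       G = (d%:R / N%:R) *: (1%:M + sqrtC ((N%:R - d%:R) / (d%:R * (N%:R - 1))) *: Q)) /\
  (max_offdiag_sq G = b <->
     is_ETF d W (fun k => sqrtC (N%:R / d%:R) *: (Sh *m w k)) /\
     (forall j, v j = Pv *m Sd *m w j)).
Proof.
move=> h1 h2 h3 h4 h5 h6 h7 h8 h9 h10 h11.
exact: (main_sec h1 h2 h3 h4 h5 h6 h7 h8 h9 h10 h11).
Qed.
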